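(* Let $m\ge 2$, $n\ge1$ and $1\le u\le n$ be integers. Then $$\big(\dim\mathcal H_n^m\big)^{-2}\sum_{i=0}^{u-1}d_{\lambda_{n-i}}\;=\;1-\Big[\prod_{i=1}^{u}\frac{n-i+1}{n+m-i}\Big]^2 ,$$ where $d_{\lambda_k}$ is the dimension of $\lambda_k$ and $\dim\mathcal H_n^m=\binom{n+m-1}{n}$.
   Context: For $k\in\mathbb N$, $\lambda_k$ denotes the irreducible representation of $\mathrm{SU}(m)$ with Young diagram $(2k,k,\dots,k,0)$, i.e. first row of $2k$ boxes, rows $2,\dots,m-1$ of $k$ boxes each, and empty $m$-th row; $d_{\lambda_k}$ is its dimension. $\mathcal H_n^m$ is the space of $n$ bosons in $m$ modes, of dimension $\binom{n+m-1}{n}$. *)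

(* Defs.v *)
From mathcomp Require Import all_boot all_order all_algebra.
Set Implicit Arguments. Unset Strict Implicit. Unset Printing Implicit Defensive.
Import Order.TTheory GRing.Theory Num.Theory.
Local Open Scope ring_scope.

(* Row lengths (0-indexed rows 0..m-1) of the Young diagram (2k,k,...,k,0)
   with m rows: row 0 has 2k boxes, rows 1..m-2 have k boxes, row m-1 is empty. *)
Definition lambda_row (m k : nat) (i : nat) : nat :=
  if i == 0%N then (2 * k)%N else if (i < m.-1)%N then k else 0%N.

(* Dimension of the irreducible SU(m)-representation with highest weight
   given by the partition lam (rows 0..m-1), via the Weyl dimension formula
   d_lam = prod_{i<j} (lam_i - lam_j + j - i) / (j - i). *)
Definition weyl_dim (m : nat) (lam : nat -> nat) : rat :=
  \prod_(i < m) \prod_(j < m | (i < j)%N)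
     (((lam i)%:R - (lam j)%:R + (j : nat)%:R - (i : nat)%:R)
        / ((j : nat)%:R - (i : nat)%:R)).

Definition d_lambda (m k : nat) : rat := weyl_dim m (lambda_row m k).

Definition dimH (m n : nat) : nat := 'C(n + m - 1, n).

(* Main.v *)
Require Import Defs.
From mathcomp Require Import all_boot all_order all_algebra.
From mathcomp Require Import zify ring lra.
Import Order.TTheory GRing.Theory Num.Theory.
Local Open Scope ring_scope.

Definition Pp (p k : nat) : rat := \prod_(1 <= t < p.+1) ((k + t)%:R / t%:R).

Lemma Pp_bin p k : Pp p k = ('C(k + p, p))%:R.
Proof.
elim: p => [|p IH]; first by rewrite /Pp big_geq // addn0 bin0.
rewrite /Pp big_nat_recr //= -/(Pp p k) IH.
have h := mul_bin_diag (k + p.+1) p.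
rewrite addnS /= in h.
have hp : (p.+1%:R : rat) != 0 by rewrite pnatr_eq0.
have h' : ('C((k + p).+1, p.+1)%:R : rat) = (k + p).+1%:R * 'C(k + p, p)%:R / p.+1%:R.
  by rewrite -natrM h natrM mulrC mulrA mulVf // mul1r.
rewrite addnS h' -addnS; field; by rewrite addrC natr1 pnatr_eq0.
Qed.

Lemma tri_nat (m : nat) (F : nat -> nat -> rat) :
  \prod_(i < m) \prod_(j < m | (i < j)%N) F i j =
  \prod_(0 <= i < m) \prod_(i.+1 <= j < m) F i j.
Proof.
rewrite -(big_mkord xpredT (fun i => \prod_(j < m | (i < j)%N) F i j)); apply: eq_big_nat => i /andP[_ him].
rewrite -(big_mkord (fun j => (i < j)%N) (F i)) (@big_cat_nat _ _ _ i.+1 0 m _ _ (leq0n i.+1) him) /=.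
rewrite big_nat_cond big_pred0 ?mul1r; last first.
  by move=> j /=; apply/negbTE; lia.
rewrite big_nat_cond [RHS]big_nat_cond; apply: eq_bigl => j.
by case/boolP: ((i.+1 <= j < m)%N) => //= /andP[a _]; rewrite a.
Qed.

Lemma weyl_eq p k : d_lambda p.+2 k = (Pp p k)^+2 * (2 * k + p + 1)%:R / (p + 1)%:R.
Proof.
rewrite /d_lambda /weyl_dim.
rewrite (tri_nat p.+2 (fun a b => ((lambda_row p.+2 k a)%:R - (lambda_row p.+2 k b)%:R + b%:R - a%:R) / (b%:R - a%:R))).
rewrite big_nat_recl // big_nat_recr //=.
have L0 : lambda_row p.+2 k 0 = (2 * k)%N by [].
have L1 : forall i, (0 < i < p.+1)%N -> lambda_row p.+2 k i = k.
  by move=> i /andP[a b]; rewrite /lambda_row; case: i a b => //= i _ b; rewrite b.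
have L2 : lambda_row p.+2 k p.+1 = 0%N by rewrite /lambda_row /= ltnn.
have E0 : \prod_(1 <= i < p.+1)
     (((lambda_row p.+2 k 0)%:R - (lambda_row p.+2 k i)%:R + i%:R - 0) /
      (i%:R - 0)) = Pp p k :> rat.
  apply: eq_big_nat => i hi; rewrite L0 L1 // !subr0 natrD natrM; congr (_ / _); ring.
rewrite E0 L0 (big_nat_recr _ _ _ (leq0n p)) /= [\prod_(p.+2 <= j < p.+2) _]big_geq // mulr1.
have E1 : \prod_(0 <= i < p)
     \prod_(i.+2 <= j < p.+2)
        (((lambda_row p.+2 k i.+1)%:R - (lambda_row p.+2 k j)%:R + j%:R -
          i.+1%:R) / (j%:R - i.+1%:R)) = Pp p k :> rat.
  rewrite /Pp big_add1 /= big_nat_rev /= add0n.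
  apply: eq_big_nat => i hi.
  rewrite big_nat_recr /=; last by lia.
  rewrite big_nat_cond big1 ?mul1r; last first.
    move=> j /andP[hj _]; rewrite !L1 ?subrr ?add0r; try lia.
    rewrite divff // subr_eq0 eqr_nat; lia.
  rewrite L2 L1; last by lia.
  have -> : (p - i.+1).+1 = (p - i)%N by lia.
  rewrite natrB; last by lia.
  rewrite natrD; congr (_ / _); rewrite -!natr1; ring.
rewrite E1 L2; field.
by rewrite natr1 pnatr_eq0.
Qed.

Definition Dp (p k : nat) : rat := ('C(k + p.+2 - 1, k))%:R.

Lemma Dp_eq p k : Dp p k = 'C(k + p, p)%:R * (k + p + 1)%:R / (p + 1)%:R.
Proof.
rewrite /Dp.
have -> : (k + p.+2 - 1 = (k + p).+1)%N by lia.
rewrite -bin_sub; last by lia.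
have -> : ((k + p).+1 - k = p.+1)%N by lia.
have h := mul_bin_diag (k + p).+1 p; rewrite /= in h.
have hp : (p.+1%:R : rat) != 0 by rewrite pnatr_eq0.
have h' : ('C((k + p).+1, p.+1)%:R : rat) = (k + p).+1%:R * 'C(k + p, p)%:R / p.+1%:R.
  by rewrite -natrM h natrM mulrC mulrA mulVf // mul1r.
by rewrite h' !addn1; congr (_ / _); rewrite mulrC.
Qed.

Lemma Dp_pred p k : Dp p k.+1.-1 = 'C(k.+1 + p, p)%:R * k.+1%:R / (p + 1)%:R.
Proof.
rewrite /Dp /=.
have -> : (k + p.+2 - 1 = k.+1 + p)%N by lia.
rewrite -bin_sub; last by lia.
have -> : (k.+1 + p - k = p.+1)%N by lia.
have h := mul_bin_left (k.+1 + p) p.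
rewrite (_ : (k.+1 + p - p = k.+1)%N) in h; last by lia.
have hp : (p.+1%:R : rat) != 0 by rewrite pnatr_eq0.
have h' : ('C(k.+1 + p, p.+1)%:R : rat) = k.+1%:R * 'C(k.+1 + p, p)%:R / p.+1%:R.
  by rewrite -natrM -h natrM mulrC mulrA mulVf // mul1r.
by rewrite h' !addn1; congr (_ / _); rewrite mulrC.
Qed.

Lemma d_tel p k : (0 < k)%N -> d_lambda p.+2 k = Dp p k ^+ 2 - Dp p k.-1 ^+ 2.
Proof.
case: k => // k _.
rewrite weyl_eq Dp_pred Dp_eq Pp_bin.
rewrite !natrD natrM -!natr1.
field.
by rewrite natr1 pnatr_eq0.
Qed.

Lemma d_rat p k : (0 < k)%N -> Dp p k.-1 * (k + p + 1)%:R = Dp p k * k%:R.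
Proof.
case: k => // k _.
rewrite Dp_pred Dp_eq; field.
by rewrite natr1 pnatr_eq0.
Qed.

Lemma Dp_neq0 p k : Dp p k != 0.
Proof. by rewrite /Dp pnatr_eq0 -lt0n bin_gt0; lia. Qed.

Lemma sum_tel p n u : (u <= n)%N ->
  \sum_(0 <= i < u) d_lambda p.+2 (n - i) = Dp p n ^+ 2 - Dp p (n - u) ^+ 2.
Proof.
elim: u => [|u IH] hu; first by rewrite big_geq // subn0 subrr.
rewrite big_nat_recr //= IH; last by lia.
rewrite d_tel; last by lia.
have -> : ((n - u).-1 = n - u.+1)%N by lia.
ring.
Qed.

Lemma prod_tel p n u : (u <= n)%N ->
  \prod_(1 <= i < u.+1) ((n - i + 1)%:R / (n + p.+2 - i)%:R) = Dp p (n - u) / Dp p n :> rat.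
Proof.
elim: u => [|u IH] hu; first by rewrite big_geq // subn0 divff // Dp_neq0.
rewrite big_nat_recr //= IH; last by lia.
have h : Dp p (n - u).-1 * (n - u + p + 1)%:R = Dp p (n - u) * (n - u)%:R.
  by apply: d_rat; lia.
have -> : (n - u.+1 + 1 = n - u)%N by lia.
have -> : (n + p.+2 - u.+1 = n - u + p + 1)%N by lia.
have -> : (n - u.+1 = (n - u).-1)%N by lia.
have hk : ((n - u + p + 1)%:R : rat) != 0 by rewrite pnatr_eq0; lia.
have h2 : Dp p (n - u).-1 = Dp p (n - u) * (n - u)%:R / (n - u + p + 1)%:R.
  by rewrite -h mulfK.
rewrite h2; field.
by rewrite -/(Dp p n) Dp_neq0 -natrD natr1 pnatr_eq0.
Qed.

Theorem mainTheorem3 (m n u : nat) (hm : (2 <= m)%N) (hn : (1 <= n)%N)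
    (hu1 : (1 <= u)%N) (hun : (u <= n)%N) :
  ((dimH m n)%:R : rat) ^- 2 * \sum_(0 <= i < u) d_lambda m (n - i)
  = 1 - (\prod_(1 <= i < u.+1) ((n - i + 1)%:R / (n + m - i)%:R)) ^+ 2.
Proof.
case: m hm => [|[|p]] // _.
rewrite sum_tel // prod_tel //.
rewrite -/(Dp p n).
have := Dp_neq0 p n.
move=> hD; field; exact: hD.
Qed.
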